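(* Let $H\in\mathbb R^{d\times p}$ have rank $d$ and let $\prec$ be a partial order on $[d]$. Then there exists a unique partial order RQ decomposition $H=RQ$ of $H$ with respect to $\prec$. If moreover $\prec$ is consistent with the total order $1,2,\dots,d$ (i.e. $i\prec j$ implies $i<j$), then this decomposition is produced by the following procedure: for $i=d,d-1,\dots,1$, let $\mathbf h_i$ be the $i$-th row of $H$, let $W_i=\langle\mathbf q_j:j\succ i\rangle$, set $\mathbf q_i:=\mathrm{proj}_{W_i^\perp}\mathbf h_i/\|\mathrm{proj}_{W_i^\perp}\mathbf h_i\|_2$ as the $i$-th row of $Q$, let $Q_{\succeq i}$ be the submatrix of $Q$ consisting of the rows $\mathbf q_j$ with $j\succeq i$, let $\mathbf r:=(Q_{\succeq i}^\top)^\dagger\mathbf h_i^\top$, and set $R_{ij}$ equal to the entry of $\mathbf r$ corresponding to row $j$ for each $j\succeq i$, and $R_{ij}=0$ otherwise.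
   Context: $[d]=\{1,\dots,d\}$; $i\preceq j$ means $i\prec j$ or $i=j$; $\langle\cdot\rangle$ denotes linear span; $M^\dagger$ the Moore–Penrose pseudoinverse. Given a partial order $\prec$ on $[d]$, a partial order RQ decomposition of $H\in\mathbb R^{d\times p}$ is a factorization $H=RQ$ with $R\in\mathbb R^{d\times d}$ satisfying $R_{ii}\ge0$ and $R_{ij}=0$ unless $i\preceq j$, and $Q\in\mathbb R^{d\times p}$ whose $i$-th row $\mathbf q_i$ has Euclidean norm $1$ and is orthogonal to $\langle\mathbf q_j:i\prec j\rangle$. *)

(* Defs.v *)
From HB Require Import structures.
From mathcomp Require Import all_boot all_order all_algebra.
From mathcomp Require Import reals.
Set Implicit Arguments. Unset Strict Implicit. Unset Printing Implicit Defensive.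
Import Order.TTheory GRing.Theory Num.Theory.
Local Open Scope ring_scope.

Section Defs.
Variable R : realType.

Definition strict_porder (d : nat) (ord : rel 'I_d) :=
  irreflexive ord /\ transitive ord.

Definition preceq (d : nat) (ord : rel 'I_d) (i j : 'I_d) : bool :=
  ord i j || (i == j).

Definition dotr (p : nat) (u v : 'rV[R]_p) : R := \sum_(k < p) u 0 k * v 0 k.
Definition norm2 (p : nat) (u : 'rV[R]_p) : R := Num.sqrt (dotr u u).

Definition span_succ (d p : nat) (ord : rel 'I_d) (Q : 'M[R]_(d, p)) (i : 'I_d)
  : 'M[R]_p := (\sum_(j | ord i j) <<row j Q>>)%MS.

Definition is_porq (d p : nat) (ord : rel 'I_d) (H : 'M[R]_(d, p))
    (Rm : 'M[R]_d) (Q : 'M[R]_(d, p)) : Prop :=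
  [/\ H = Rm *m Q,
      (forall i, 0 <= Rm i i),
      (forall i j, ~~ preceq ord i j -> Rm i j = 0),
      (forall i, norm2 (row i Q) = 1)
    & (forall i (w : 'rV[R]_p), (w <= span_succ ord Q i)%MS ->
         dotr (row i Q) w = 0)].

Definition is_proj_perp (p : nat) (W : 'M[R]_p) (h v : 'rV[R]_p) : Prop :=
  (forall w : 'rV[R]_p, (w <= W)%MS -> dotr v w = 0) /\ (h - v <= W)%MS.

Definition is_MP_pinv (m n : nat) (A : 'M[R]_(m, n)) (X : 'M[R]_(n, m)) : Prop :=
  [/\ A *m X *m A = A, X *m A *m X = X,
      (A *m X)^T = A *m X & (X *m A)^T = X *m A].

Definition succeq_set (d : nat) (ord : rel 'I_d) (i : 'I_d) : {set 'I_d} :=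
  [set j | preceq ord i j].

Definition procedure_step (d p : nat) (ord : rel 'I_d) (H : 'M[R]_(d, p))
    (Rm : 'M[R]_d) (Q : 'M[R]_(d, p)) (i : 'I_d) : Prop :=
  (exists v : 'rV[R]_p,
     [/\ is_proj_perp (span_succ ord Q i) (row i H) v, v != 0 &
         row i Q = (norm2 v)^-1 *: v]) /\
  (* Q_{⪰i}: rows j ⪰ i of Q, in increasing order of j *)
  let S := succeq_set ord i in
  let Qsub := rowsub (fun t : 'I_#|S| => enum_val t) Q in
  exists X : 'M[R]_(#|S|, p),
    [/\ is_MP_pinv Qsub^T X,
        (forall t : 'I_#|S|, Rm i (enum_val t) = (X *m (row i H)^T) t 0)
      & (forall j, j \notin S -> Rm i j = 0)].

Definition procedure_output (d p : nat) (ord : rel 'I_d) (H : 'M[R]_(d, p))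
    (Rm : 'M[R]_d) (Q : 'M[R]_(d, p)) : Prop :=
  forall i, procedure_step ord H Rm Q i.

End Defs.

(* Main.v *)
Require Import Defs.
From HB Require Import structures.
From mathcomp Require Import all_boot all_order all_algebra.
From mathcomp Require Import reals.
Set Implicit Arguments. Unset Strict Implicit. Unset Printing Implicit Defensive.
Import Order.TTheory GRing.Theory Num.Theory.
Local Open Scope ring_scope.

Section Generic.
Variable R : realType.

Lemma dotrE p (u v : 'rV[R]_p) : dotr u v = (u *m v^T) 0 0.
Proof. by rewrite /dotr mxE; apply: eq_bigr => k _; rewrite mxE. Qed.

Lemma dotrZl p a (u v : 'rV[R]_p) : dotr (a *: u) v = a * dotr u v.
Proof. by rewrite !dotrE -scalemxAl mxE. Qed.

Lemma dotrBl p (u u' v : 'rV[R]_p) : dotr (u - u') v = dotr u v - dotr u' v.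
Proof. by rewrite !dotrE mulmxBl mxE [X in _ + X]mxE. Qed.

Lemma dotrZr p a (u v : 'rV[R]_p) : dotr u (a *: v) = a * dotr u v.
Proof. by rewrite !dotrE linearZ /= -scalemxAr mxE. Qed.

Lemma dotr_ge0 p (u : 'rV[R]_p) : 0 <= dotr u u.
Proof. by apply: sumr_ge0 => k _; rewrite -expr2 sqr_ge0. Qed.

Lemma dotr_eq0 p (u : 'rV[R]_p) : dotr u u = 0 -> u = 0.
Proof.
move=> h; apply/rowP => k; rewrite mxE.
have hp : forall l, predT l -> 0 <= u 0 l * u 0 l.
  by move=> l _; rewrite -expr2 sqr_ge0.
have := @psumr_eq0P _ _ predT (fun k => u 0 k * u 0 k) hp h k isT.
by move=> /eqP; rewrite mulf_eq0 orbb => /eqP.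
Qed.

Lemma norm2Z p a (u : 'rV[R]_p) : norm2 (a *: u) = `|a| * norm2 u.
Proof.
by rewrite /norm2 dotrZl dotrZr mulrA -expr2 sqrtrM ?sqr_ge0 // sqrtr_sqr.
Qed.

Lemma norm20 p : norm2 (0 : 'rV[R]_p) = 0.
Proof. by rewrite -(scale0r (0 : 'rV[R]_p)) norm2Z normr0 mul0r. Qed.

Lemma norm2_gt0 p (u : 'rV[R]_p) : u != 0 -> 0 < norm2 u.
Proof.
move=> nz; rewrite /norm2 sqrtr_gt0 lt_def dotr_ge0 andbT.
by apply: contra nz => /eqP /dotr_eq0 ->.
Qed.

Lemma gram_unit m n (B : 'M[R]_(m, n)) : row_free B -> B *m B^T \in unitmx.
Proof.
move=> fB; rewrite -row_free_unit; apply: inj_row_free => v Hv.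
have: v *m B = 0.
  apply: dotr_eq0; rewrite dotrE trmx_mul mulmxA -(mulmxA v) Hv mul0mx.
  by rewrite mxE.
by move/eqP; rewrite mulmx_free_eq0 // => /eqP.
Qed.

Lemma rowsub_free m m' n (f : 'I_m' -> 'I_m) (A : 'M[R]_(m, n)) :
  row_free A -> injective f -> row_free (rowsub f A).
Proof.
move=> fA finj; apply: inj_row_free => x Hx.
move: Hx; rewrite rowsubE mulmxA => /eqP; rewrite mulmx_free_eq0 // => /eqP E.
apply/rowP => t; have := congr1 (fun M : 'M_(1, m) => M 0 (f t)) E => /=.
rewrite !mxE (bigD1 t) //= !mxE eqxx mulr1 big1 ?addr0 // => s nst.
by rewrite !mxE (inj_eq finj) (negbTE nst) mulr0.
Qed.

Lemma rows_agree m n (c : 'rV[R]_m) (A B : 'M[R]_(m, n)) :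
  (forall k, c 0 k != 0 -> row k A = row k B) -> c *m A = c *m B.
Proof.
move=> h; rewrite !mulmx_sum_row; apply: eq_bigr => k _.
by case: (eqVneq (c 0 k) 0) => [->|/h ->]; rewrite ?scale0r.
Qed.

Definition mask m n (P : pred 'I_m) (A : 'M[R]_(m, n)) : 'M[R]_(m, n) :=
  \matrix_k (if P k then row k A else 0).

Lemma mask_coef m n (P : pred 'I_m) (A : 'M[R]_(m, n)) v : (v <= mask P A)%MS ->
  exists c : 'rV_m, (forall k, ~~ P k -> c 0 k = 0) /\ v = c *m A.
Proof.
case/submxP => x ->; exists (\row_k (if P k then x 0 k else 0)); split.
  by move=> k /negbTE nk; rewrite mxE nk.
rewrite !mulmx_sum_row; apply: eq_bigr => k _; rewrite rowK mxE.
by case: (P k); rewrite ?scaler0 ?scale0r.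
Qed.

Lemma mask_sup m n (P : pred 'I_m) (A : 'M[R]_(m, n)) (c : 'rV[R]_m) :
  (forall k, ~~ P k -> c 0 k = 0) -> (c *m A <= mask P A)%MS.
Proof.
move=> hc; have -> : c *m A = c *m mask P A.
  apply: rows_agree => k; rewrite rowK; case: ifP => // /negbT /hc ->.
  by rewrite eqxx.
exact: submxMl.
Qed.

Lemma row_mask_sub m n (P : pred 'I_m) (A : 'M[R]_(m, n)) i :
  P i -> (row i A <= mask P A)%MS.
Proof. by move=> Pi; apply: (eq_row_sub i); rewrite rowK Pi. Qed.

Lemma mask_mono m n (P1 P2 : pred 'I_m) (A : 'M[R]_(m, n)) :
  (forall k, P1 k -> P2 k) -> (mask P1 A <= mask P2 A)%MS.
Proof.
move=> h; apply/row_subP => k; rewrite rowK; case: ifP => Pk.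
  by apply: row_mask_sub; apply: h.
exact: sub0mx.
Qed.

Lemma mask_notin m n (P : pred 'I_m) (A : 'M[R]_(m, n)) i :
  row_free A -> ~~ P i -> ~~ (row i A <= mask P A)%MS.
Proof.
move=> fA Pi; apply/negP => /mask_coef [c [hc E]].
have : ('e_i - c) *m A == 0 by rewrite mulmxBl -rowE -E subrr.
rewrite mulmx_free_eq0 // => /eqP /matrixP /(_ 0 i).
by rewrite !mxE hc // !eqxx subr0 /= => /eqP; rewrite pnatr_eq0.
Qed.
Lemma subB m1 m2 n (A B : 'M[R]_(m1, n)) (C : 'M[R]_(m2, n)) :
  (A <= C)%MS -> (B <= C)%MS -> ((A - B)%R <= C)%MS.
Proof. by move=> hA hB; apply: addmx_sub => //; rewrite eqmx_opp. Qed.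

End Generic.

Section Main.
Variables (R : realType) (d p : nat) (H : 'M[R]_(d, p)) (ord : rel 'I_d).
Hypothesis sp : strict_porder ord.
Hypothesis fH : row_free H.

Let irr : irreflexive ord := sp.1.
Let tr : transitive ord := sp.2.

Lemma ord_ind (P : 'I_d -> Prop) :
  (forall i, (forall j, ord i j -> P j) -> P i) -> forall i, P i.
Proof.
move=> IH.
suff: forall n i, (#|[set j | ord i j]| < n)%N -> P i.
  by move=> h i; apply: (h _ i (ltnSn _)).
elim=> [//|n IHn] i hi; apply: IH => j hij; apply: IHn.
rewrite ltnS in hi; apply: leq_trans hi; apply: proper_card; apply/properP; split.
  by apply/subsetP => k; rewrite !inE => /(tr hij).
by exists j; rewrite !inE ?hij ?irr.
Qed.

Lemma decomp (Rm : 'M[R]_d) (Q : 'M[R]_(d, p)) i :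
  row i H = row i Rm *m Q ->
  (forall k, ~~ preceq ord i k -> Rm i k = 0) ->
  row i H = Rm i i *: row i Q + \sum_(k | ord i k) Rm i k *: row k Q.
Proof.
move=> E Z; rewrite E mulmx_sum_row (bigD1 i) //= mxE; congr (_ + _).
rewrite [LHS]big_mkcond [RHS]big_mkcond; apply: eq_bigr => k _ /=.
case: eqVneq => [->|nki]; first by rewrite irr.
case: (boolP (ord i k)) => hik; first by rewrite mxE.
by rewrite mxE Z ?scale0r // /preceq (negbTE hik) eq_sym (negbTE nki).
Qed.

Lemma sum_in_W (Rm : 'M[R]_d) (Q : 'M[R]_(d, p)) i :
  ((\sum_(k | ord i k) Rm i k *: row k Q)%R <= span_succ ord Q i)%MS.
Proof.
apply: summx_sub => k hk; apply: scalemx_sub.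
by apply: (sumsmx_sup k) => //; rewrite genmxE.
Qed.

Lemma W_mask (Q : 'M[R]_(d, p)) i :
  (forall k, ord i k -> (row k Q <= mask (preceq ord k) H)%MS) ->
  (span_succ ord Q i <= mask (ord i) H)%MS.
Proof.
move=> hQ; apply/sumsmx_subP => k hk; rewrite genmxE.
apply: submx_trans (hQ k hk) _; apply: mask_mono => l.
by rewrite /preceq => /orP [hkl | /eqP <-] //; apply: tr hkl.
Qed.

Lemma key (Rm : 'M[R]_d) (Q : 'M[R]_(d, p)) i :
  row i H = row i Rm *m Q -> 0 <= Rm i i ->
  (forall k, ~~ preceq ord i k -> Rm i k = 0) ->
  (forall k, ord i k -> (row k Q <= mask (preceq ord k) H)%MS) ->
  0 < Rm i i /\ (row i Q <= mask (preceq ord i) H)%MS.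
Proof.
move=> E ge Z hQ.
set w := \sum_(k | ord i k) Rm i k *: row k Q.
have hd := decomp E Z; rewrite -/w in hd.
have wm : (w <= mask (ord i) H)%MS := submx_trans (sum_in_W Rm Q i) (W_mask hQ).
have nz : Rm i i != 0.
  apply/eqP => z; move: hd; rewrite z scale0r add0r => hw.
  have ni : ~~ ord i i by rewrite irr.
  by move: (mask_notin (A:=H) (P:=ord i) fH ni); rewrite hw wm.
split; first by rewrite lt_def nz ge.
have -> : row i Q = (Rm i i)^-1 *: (row i H - w).
  by rewrite hd addrK scalerA mulVf // scale1r.
apply: scalemx_sub; apply: subB.
  by apply: row_mask_sub; rewrite /preceq eqxx orbT.
apply: submx_trans wm _; apply: mask_mono => k hk; by rewrite /preceq hk.
Qed.

Lemma porq_props (Rm : 'M[R]_d) (Q : 'M[R]_(d, p)) :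
  is_porq ord H Rm Q ->
  forall i, 0 < Rm i i /\ (row i Q <= mask (preceq ord i) H)%MS.
Proof.
case=> E ge Z _ _; apply: ord_ind => i IH.
apply: key; [by rewrite E row_mul | exact: ge | exact: Z |].
by move=> k hk; case: (IH k hk).
Qed.

Lemma porq_free (Rm : 'M[R]_d) (Q : 'M[R]_(d, p)) :
  is_porq ord H Rm Q -> row_free Q.
Proof.
case=> E _ _ _ _; rewrite /row_free eqn_leq rank_leq_row /=.
have := mxrankM_maxr Rm Q; rewrite -E; move: fH; rewrite /row_free => /eqP ->.
done.
Qed.


Lemma porq_unique (R1 R2 : 'M[R]_d) (Q1 Q2 : 'M[R]_(d, p)) :
  is_porq ord H R1 Q1 -> is_porq ord H R2 Q2 -> R1 = R2 /\ Q1 = Q2.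
Proof.
move=> P1 P2.
have hQ : Q1 = Q2.
  apply/row_matrixP; apply: ord_ind => i IH.
  have eW : span_succ ord Q1 i = span_succ ord Q2 i.
    by rewrite /span_succ; apply: eq_bigr => k /IH ->.
  have [pos1 _] := porq_props P1 i; have [pos2 _] := porq_props P2 i.
  case: P1 => E1 g1 Z1 N1 O1; case: P2 => E2 g2 Z2 N2 O2.
  have r1 : row i H = row i R1 *m Q1 by rewrite E1 row_mul.
  have r2 : row i H = row i R2 *m Q2 by rewrite E2 row_mul.
  have h1 := decomp r1 (Z1 i); have h2 := decomp r2 (Z2 i).
  set w1 := (\sum_(k | ord i k) R1 i k *: row k Q1)%R in h1.
  set w2 := (\sum_(k | ord i k) R2 i k *: row k Q2)%R in h2.
  have e1 : R1 i i *: row i Q1 = row i H - w1 by rewrite h1 addrK.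
  have e2 : R2 i i *: row i Q2 = row i H - w2 by rewrite h2 addrK.
  set x := R1 i i *: row i Q1 - R2 i i *: row i Q2.
  have xW : (x <= span_succ ord Q1 i)%MS.
    rewrite /x e1 e2 opprB addrC addrA subrK; apply: subB.
      by rewrite eW; apply: sum_in_W.
    exact: sum_in_W.
  have x0 : x = 0.
    apply: dotr_eq0; rewrite {1}/x dotrBl !dotrZl O1 // O2 -?eW //.
    by rewrite !mulr0 subrr.
  have ex : R1 i i *: row i Q1 = R2 i i *: row i Q2 by apply: subr0_eq.
  have er : R1 i i = R2 i i.
    have := congr1 (@norm2 R p) ex; rewrite !norm2Z N1 N2 !mulr1.
    by rewrite !ger0_norm // ltW.
  by move: ex; rewrite er => /(scalerI (lt0r_neq0 pos2)).
split => //; apply/row_matrixP => i.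
apply: (row_free_inj (porq_free P1)).
case: P1 => E1 _ _ _ _; case: P2 => E2 _ _ _ _.
by rewrite /= -!row_mul -E1 hQ -E2.
Qed.


Lemma porq_proc (Rm : 'M[R]_d) (Q : 'M[R]_(d, p)) :
  is_porq ord H Rm Q -> procedure_output ord H Rm Q.
Proof.
move=> P i; have [pos _] := porq_props P i; have fQ := porq_free P.
case: P => E g Z N O.
have r1 : row i H = row i Rm *m Q by rewrite E row_mul.
have hd := decomp r1 (Z i).
split.
  exists (Rm i i *: row i Q); split.
  - split; first by move=> w hw; rewrite dotrZl O // mulr0.
    by rewrite {1}hd addrC addKr; apply: sum_in_W.
  - rewrite scaler_eq0 negb_or lt0r_neq0 //=; apply/eqP => q0.
    by move: (N i); rewrite q0 norm20 => /eqP; rewrite eq_sym oner_eq0.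
  - by rewrite norm2Z N mulr1 ger0_norm ?ltW // scalerA mulVf ?lt0r_neq0 // scale1r.
move=> S Qsub.
have fS : row_free Qsub by apply: rowsub_free fQ enum_val_inj.
have Gu := gram_unit fS.
exists (invmx (Qsub *m Qsub^T) *m Qsub).
have XA : invmx (Qsub *m Qsub^T) *m Qsub *m Qsub^T = 1%:M.
  by rewrite -mulmxA mulVmx.
split.
- split.
  + by rewrite -mulmxA XA mulmx1.
  + by rewrite XA mul1mx.
  + by rewrite !trmx_mul trmxK trmx_inv trmx_mul trmxK mulmxA.
  + by rewrite XA trmx1.
- move=> t.
  pose r := \row_(t0 < #|S|) Rm i (enum_val t0).
  have hr : row i H = r *m Qsub.
    rewrite r1 !mulmx_sum_row (bigID (fun k => k \in S)) /=.
    rewrite [X in _ + X]big1 ?addr0.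
      rewrite big_enum_val; apply: eq_bigr => s _.
      by rewrite !mxE row_rowsub.
    move=> k hk; rewrite mxE Z ?scale0r //.
    by move: hk; rewrite /S inE.
  by rewrite hr trmx_mul mulmxA XA mul1mx !mxE.
- by move=> j; rewrite /S inE => hj; apply: Z.
Qed.


Definition porq_row (Rm : 'M[R]_d) (Q : 'M[R]_(d, p)) i :=
  [/\ row i H = row i Rm *m Q, 0 <= Rm i i,
      (forall k, ~~ preceq ord i k -> Rm i k = 0), norm2 (row i Q) = 1
    & forall w, (w <= span_succ ord Q i)%MS -> dotr (row i Q) w = 0].

Definition Inv (U : {set 'I_d}) (Rm : 'M[R]_d) (Q : 'M[R]_(d, p)) :=
  forall i, i \in U -> porq_row Rm Q i /\ (row i Q <= mask (preceq ord i) H)%MS.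

Definition upclosed (U : {set 'I_d}) :=
  forall j k, j \in U -> ord j k -> k \in U.

Lemma maximal (U : {set 'I_d}) i0 : i0 \notin U ->
  exists i, i \notin U /\ forall k, ord i k -> k \in U.
Proof.
move: i0; apply: (ord_ind (P := fun i0 => i0 \notin U ->
  exists i, i \notin U /\ forall k, ord i k -> k \in U)) => i0 IH i0U.
case: (boolP [forall k, ord i0 k ==> (k \in U)]) => [/forallP h | /forallPn [k]].
  by exists i0; split => // k hk; apply: (implyP (h k) hk).
by rewrite negb_imply => /andP [hk kU]; apply: IH hk kU.
Qed.

Lemma ext (U : {set 'I_d}) (Rm : 'M[R]_d) (Q : 'M[R]_(d, p)) i :
  upclosed U -> Inv U Rm Q -> i \notin U -> (forall k, ord i k -> k \in U) ->
  exists Rm' Q', Inv (i |: U) Rm' Q'.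
Proof.
move=> uc inv niU hi.
set W := span_succ ord Q i.
have [B [fB BW WB]] : exists B : 'M[R]_(\rank W, p),
    [/\ row_free B, (B <= W)%MS & (W <= B)%MS].
  exists (row_base W); split; [exact: row_base_free | by rewrite eq_row_base | by rewrite eq_row_base].
have Gu := gram_unit fB.
set h := row i H.
set v := h - h *m B^T *m invmx (B *m B^T) *m B.
have vB : v *m B^T = 0 by rewrite /v mulmxBl -!mulmxA mulVmx // mulmx1 subrr.
have orth : forall w, (w <= W)%MS -> dotr v w = 0.
  move=> w hw; have : (w <= B)%MS by apply: submx_trans hw WB.
  case/submxP => x ->; rewrite dotrE trmx_mul mulmxA vB mul0mx mxE //.
have hvW : (h - v <= W)%MS.
  by rewrite /v opprB addrC subrK; apply: submx_trans (submxMl _ _) BW.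
have WQ : (W <= mask (ord i) Q)%MS.
  by apply/sumsmx_subP => k hk; rewrite genmxE; apply: row_mask_sub.
have [c [hc ec]] := mask_coef (submx_trans hvW WQ).
have WH : (W <= mask (ord i) H)%MS.
  by apply: W_mask => k hk; case: (inv k (hi k hk)).
have ni : ~~ ord i i by rewrite irr.
have vnz : v != 0.
  apply/eqP => v0; have := mask_notin (A := H) (P := ord i) fH ni.
  by move: hvW; rewrite v0 subr0 => hW; rewrite (submx_trans hW WH).
set nv := norm2 v.
have nvp : 0 < nv := norm2_gt0 vnz.
set q := nv^-1 *: v.
pose Q' := \matrix_k (if k == i then q else row k Q).
pose Rm' := \matrix_k (if k == i then nv *: 'e_i + c else row k Rm).
have rQo k : k != i -> row k Q' = row k Q by move=> /negbTE nk; rewrite rowK nk.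
have eR k l : Rm' k l = (row k Rm') 0 l by rewrite [RHS]mxE.
exists Rm', Q' => j; rewrite in_setU1 => /orP [/eqP -> | jU].
- have eWi : span_succ ord Q' i = W.
    rewrite /W /span_succ; apply: eq_bigr => k hk; rewrite rQo //.
    by apply/eqP => e; move: hk; rewrite e irr.
  have pr : porq_row Rm' Q' i.
    split.
    + rewrite rowK eqxx mulmxDl -scalemxAl -rowE rowK eqxx /q scalerA.
      rewrite mulfV ?lt0r_neq0 // scale1r.
      have -> : c *m Q' = c *m Q.
        apply: rows_agree => k ck; rewrite rQo //.
        by apply/eqP => e; move: ck; rewrite e hc ?eqxx.
      by rewrite -ec addrC subrK.
    + rewrite eR rowK eqxx !mxE !eqxx /= mulr1 (hc i) // addr0.
      exact: ltW.
    + move=> k; rewrite /preceq negb_or => /andP [nik nki].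
      rewrite eR rowK eqxx !mxE (hc k) // addr0.
      by rewrite eq_sym (negbTE nki) andbF mulr0.
    + by rewrite rowK eqxx /q norm2Z ger0_norm ?invr_ge0 ?ltW // mulVf ?lt0r_neq0.
    + by move=> w; rewrite eWi => hw; rewrite rowK eqxx /q dotrZl orth // mulr0.
  split => //; case: pr => a b z _ _.
  have hk' : forall k, ord i k -> (row k Q' <= mask (preceq ord k) H)%MS.
    move=> k hk; rewrite rQo; first by case: (inv k (hi k hk)).
    by apply/eqP => e; move: hk; rewrite e irr.
  by case: (key a b z hk').
- have nji : j != i by apply/eqP => e; move: niU; rewrite -e jU.
  have [pr mk] := inv j jU; case: pr => a b z n o.
  have eW' : span_succ ord Q' j = span_succ ord Q j.
    rewrite /span_succ; apply: eq_bigr => k hk; rewrite rQo //.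
    by apply/eqP => e; move: niU; rewrite -e (uc j k jU hk).
  have rowR : row j Rm' = row j Rm by rewrite rowK (negbTE nji).
  split; last by rewrite rQo.
  split.
  + rewrite rowR a; apply: rows_agree => k hk; rewrite rQo //.
    apply/eqP => e; move: hk; rewrite mxE e.
    case: (boolP (preceq ord j i)) => [/orP [h'|/eqP h'] | h'].
    * by move: niU; rewrite (uc j i jU h').
    * by move: nji; rewrite h' eqxx.
    * by rewrite z ?eqxx.
  + by rewrite eR rowR mxE.
  + by move=> k hk; rewrite eR rowR mxE; apply: z.
  + by rewrite rQo.
  + by move=> w; rewrite eW' rQo //; apply: o.
Qed.

Lemma exist_porq : exists Rm Q, is_porq ord H Rm Q.
Proof.
have step : forall n, (n <= d)%N -> exists U Rm Q,
    [/\ upclosed U, (n <= #|U|)%N & Inv U Rm Q].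
  elim=> [_|n IHn hn].
    by exists set0, 0, 0; split => // [j k|j]; rewrite in_set0.
  have [U [Rm [Q [uc hU inv]]]] := IHn (ltnW hn).
  case: (boolP (U == setT)) => [/eqP eU | nU].
    by exists U, Rm, Q; split => //; rewrite eU cardsT card_ord.
  have [i0 i0U] : exists i0, i0 \notin U.
    move: nU; rewrite eqEsubset subsetT /= => /subsetPn [x _ xU].
    by exists x.
  have [i [iU hi]] := maximal i0U.
  have [Rm' [Q' inv']] := ext uc inv iU hi.
  exists (i |: U), Rm', Q'; split => //.
    move=> j k; rewrite !in_setU1 => /orP [/eqP -> hk | jU hk]; apply/orP; right.
      exact: hi.
    exact: uc jU hk.
  by rewrite cardsU1 iU add1n ltnS.
have [U [Rm [Q [_ hU inv]]]] := step d (leqnn d).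
have eU : U = setT by apply/eqP; rewrite eqEcard subsetT cardsT card_ord.
have invT : forall i, porq_row Rm Q i.
  by move=> i; have [] := inv i; rewrite ?eU ?inE.
exists Rm, Q; split.
- by apply/row_matrixP => i; rewrite row_mul; case: (invT i).
- by move=> i; case: (invT i).
- by move=> i; case: (invT i).
- by move=> i; case: (invT i).
- by move=> i; case: (invT i).
Qed.

End Main.

Unset Implicit Arguments.

Theorem proposition7 (R : realType) (d p : nat) (H : 'M[R]_(d, p))
    (ord : rel 'I_d) :
  strict_porder ord -> \rank H = d ->
  (exists! RQ : 'M[R]_d * 'M[R]_(d, p), is_porq ord H RQ.1 RQ.2) /\
  ((forall i j : 'I_d, ord i j -> (i < j)%N) ->
   forall (Rm : 'M[R]_d) (Q : 'M[R]_(d, p)),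
     is_porq ord H Rm Q -> procedure_output ord H Rm Q).
Proof.
move=> sp rk; have fH : row_free H by rewrite /row_free rk.
split.
  have [Rm [Q P]] := exist_porq sp fH.
  exists (Rm, Q); split => // [[R2 Q2]] /= P2.
  by have [-> ->] := porq_unique sp fH P P2.
by move=> _ Rm Q P; exact: (@porq_proc R d p H ord sp fH Rm Q P).
Qed.
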